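(* Let $a>1$, $d\ge 4$, and let $G$ be generated by the security model $\mathcal{S}(n,a,d)$. Let $T_1=\log^{a+1} n$ and let $C_t$ be the set of colors appearing in $G_t$ (the graph at the end of time step $t$). Then with probability $1-o(1)$, for all $t$ with $T_1\le t\le n$, $$\frac{t}{2\log^a t}\le |C_t|\le \frac{2t}{\log^a t}.$$
   Context: Security model $\mathcal{S}(n,a,d)$ (homophyly exponent $a$, natural number $d$): start with an initial graph $G_2$ on two nodes, each of which is a seed node with its own distinct color. For $i=3,\dots,n$, given $G_{i-1}$, let $p_i=(\log i)^{-a}$ and create a new node $v$. With probability $p_i$, $v$ receives a brand-new color $c$ and is called the seed node of $c$; then one edge $(v,u)$ is added with $u$ chosen with probability proportional to degrees in $G_{i-1}$, and $d-1$ edges $(v,u_j)$ are added, each $u_j$ chosen uniformly at random among all seed nodes of $G_{i-1}$. Otherwise, $v$ picks a color $c$ uniformly at random among all colors present in $G_{i-1}$, takes color $c$, and $d$ edges $(v,u_j)$ are added, each $u_j$ chosen with probability proportional to degree among the nodes of color $c$ in $G_{i-1}$. The network is $G=G_n$, and step $i$ is the step creating the $i$-th node. *)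

(* Defs.v *)
From Stdlib Require Import Reals Lra List Arith.
Import ListNotations.
Open Scope R_scope.

Definition dist (A : Type) := list (R * A).

Definition dret {A} (x : A) : dist A := [(1, x)].

Definition dbind {A B} (m : dist A) (f : A -> dist B) : dist B :=
  flat_map (fun px => map (fun qy => (fst px * fst qy, snd qy)) (f (snd px))) m.

Definition dflip (p : R) : dist bool := [(p, true); (1 - p, false)].

Definition duniform {A} (l : list A) : dist A :=
  map (fun x => (/ INR (length l), x)) l.

Definition dweighted {A} (w : A -> nat) (l : list A) : dist A :=
  let W := fold_right (fun x s => (w x + s)%nat) 0%nat l in
  map (fun x => (INR (w x) / INR W, x)) l.

Fixpoint dreplicate {A} (k : nat) (m : dist A) : dist (list A) :=
  match k with
  | O => dret []
  | S k' => dbind m (fun x => dbind (dreplicate k' m) (fun xs => dret (x :: xs)))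
  end.

Definition dprob {A} (m : dist A) (P : A -> bool) : R :=
  fold_right (fun px s => (if P (snd px) then fst px else 0) + s) 0 m.

(* Nodes are 0, 1, ..., (length cols - 1); node k is the (k+1)-th node.
   cols k = colour of node k, seeds k = whether node k is a seed node,
   edges = multiset of (undirected) edges, ncol = number of colours created
   so far (colours are 0 .. ncol-1). *)
Record graph := mkGraph {
  cols : list nat;
  seeds : list bool;
  edges : list (nat * nat);
  ncol : nat }.

Definition nodes (g : graph) : list nat := seq 0 (length (cols g)).

Definition degree (g : graph) (u : nat) : nat :=
  length (filter (fun e => orb (Nat.eqb (fst e) u) (Nat.eqb (snd e) u)) (edges g)).

Definition seed_nodes (g : graph) : list nat :=
  filter (fun u => nth u (seeds g) false) (nodes g).

Definition color_nodes (g : graph) (c : nat) : list nat :=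
  filter (fun u => Nat.eqb (nth u (cols g) 0%nat) c) (nodes g).

Definition colors (g : graph) : list nat := nodup Nat.eq_dec (cols g).
Definition ncolors (g : graph) : nat := length (colors g).

Definition G2 : graph := mkGraph [0%nat; 1%nat] [true; true] [(0%nat, 1%nat)] 2.

Definition p_new (a : R) (i : nat) : R := Rpower (ln (INR i)) (- a).

(* step i: from G_{i-1} to G_i *)
Definition step (a : R) (d : nat) (i : nat) (g : graph) : dist graph :=
  let v := length (cols g) in
  dbind (dflip (p_new a i)) (fun b =>
    if b then
      dbind (dweighted (degree g) (nodes g)) (fun u =>
      dbind (dreplicate (d - 1) (duniform (seed_nodes g))) (fun us =>
      dret (mkGraph (cols g ++ [ncol g]) (seeds g ++ [true])
                    (edges g ++ map (fun w => (v, w)) (u :: us)) (S (ncol g)))))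
    else
      dbind (duniform (seq 0 (ncol g))) (fun c =>
      dbind (dreplicate d (dweighted (degree g) (color_nodes g c))) (fun us =>
      dret (mkGraph (cols g ++ [c]) (seeds g ++ [false])
                    (edges g ++ map (fun w => (v, w)) us) (ncol g))))).

(* run m : distribution of the history [G_{m+2}; G_{m+1}; ...; G_2] *)
Fixpoint run (a : R) (d : nat) (m : nat) : dist (list graph) :=
  match m with
  | O => dret [G2]
  | S m' => dbind (run a d m') (fun h =>
      match h with
      | g :: _ => dbind (step a d (m' + 3) g) (fun g' => dret (g' :: h))
      | [] => dret []
      end)
  end.

Definition history (a : R) (d n : nat) : dist (list graph) := run a d (n - 2).

(* G_t extracted from the history [G_n; ...; G_2] (for 2 <= t <= n) *)
Definition G_at (n : nat) (h : list graph) (t : nat) : graph := nth (n - t) h G2.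

Definition Rleb (x y : R) : bool := if Rle_dec x y then true else false.

Definition color_bound_event (a : R) (n : nat) (h : list graph) : bool :=
  forallb (fun t =>
     orb (negb (Rleb (Rpower (ln (INR n)) (a + 1)) (INR t)))
     (andb (Rleb (INR t / (2 * Rpower (ln (INR t)) a)) (INR (ncolors (G_at n h t))))
           (Rleb (INR (ncolors (G_at n h t))) (2 * INR t / Rpower (ln (INR t)) a))))
   (seq 2 (n - 1)).

(* Main.v *)
Require Import Defs.
From Stdlib Require Import Reals List.
Open Scope R_scope.
From Stdlib Require Import Lra Arith Lia Permutation.
Import ListNotations.
Open Scope R_scope.

Definition wsum {A} (m : Defs.dist A) (F : A -> R) : R :=
  fold_right (fun px s => fst px * F (snd px) + s) 0 m.

Lemma dprob_wsum {A} (m : Defs.dist A) P :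
  dprob m P = wsum m (fun x => if P x then 1 else 0).
Proof. induction m as [|[p x] m IH]; simpl; [reflexivity|]. rewrite IH.
  destruct (P x); ring. Qed.

Lemma wsum_app {A} (l1 l2 : Defs.dist A) F : wsum (l1 ++ l2) F = wsum l1 F + wsum l2 F.
Proof. induction l1 as [|[p x] l IH]; simpl; [ring|]. rewrite IH; ring. Qed.

Lemma wsum_scale {A} c (l : Defs.dist A) F :
  wsum (map (fun qy => (c * fst qy, snd qy)) l) F = c * wsum l F.
Proof. induction l as [|[p x] l IH]; simpl; [ring|]. rewrite IH; ring. Qed.

Lemma wsum_dbind {A B} (m : Defs.dist A) (f : A -> Defs.dist B) F :
  wsum (dbind m f) F = wsum m (fun x => wsum (f x) F).
Proof. unfold dbind. induction m as [|[p x] m IH]; simpl; [reflexivity|].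
  rewrite wsum_app, IH. simpl. rewrite wsum_scale. ring. Qed.

Lemma wsum_dret {A} (x : A) F : wsum (dret x) F = F x.
Proof. unfold dret; simpl; ring. Qed.

Lemma wsum_ext {A} (m : Defs.dist A) F G :
  (forall p x, In (p, x) m -> F x = G x) -> wsum m F = wsum m G.
Proof. induction m as [|[p x] m IH]; simpl; intros H; [reflexivity|].
  rewrite (H p x (or_introl eq_refl)). rewrite IH; [reflexivity|].
  intros; eapply H; right; eauto. Qed.

Definition nonneg {A} (m : Defs.dist A) := forall p x, In (p, x) m -> 0 <= p.

Lemma wsum_le {A} (m : Defs.dist A) F G : nonneg m ->
  (forall p x, In (p, x) m -> F x <= G x) -> wsum m F <= wsum m G.
Proof. induction m as [|[p x] m IH]; simpl; intros Hn H; [lra|].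
  assert (0 <= p) by (apply (Hn p x); left; auto).
  assert (F x <= G x) by (apply (H p x); left; auto).
  assert (wsum m F <= wsum m G) by (apply IH; [intros q y Hq; eapply Hn; right; eauto|intros; eapply H; right; eauto]).
  nra. Qed.

Lemma wsum_plus {A} (m : Defs.dist A) F G :
  wsum m (fun x => F x + G x) = wsum m F + wsum m G.
Proof. induction m as [|[p x] m IH]; simpl; [ring|]. rewrite IH; ring. Qed.

Lemma wsum_scal {A} (m : Defs.dist A) c F :
  wsum m (fun x => c * F x) = c * wsum m F.
Proof. induction m as [|[p x] m IH]; simpl; [ring|]. rewrite IH; ring. Qed.

Definition mass {A} (m : Defs.dist A) := wsum m (fun _ => 1).

Lemma wsum_const {A} (m : Defs.dist A) c : wsum m (fun _ => c) = c * mass m.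
Proof. unfold mass. induction m as [|[p x] m IH]; simpl; [ring|]. rewrite IH; ring. Qed.

Lemma wsum_sum {A T} (m : Defs.dist A) (H : T -> A -> R) ts :
  wsum m (fun x => fold_right (fun t s => H t x + s) 0 ts)
  = fold_right (fun t s => wsum m (H t) + s) 0 ts.
Proof. induction ts as [|t ts IH]; simpl.
  - rewrite wsum_const; ring.
  - rewrite wsum_plus, IH; reflexivity. Qed.

Lemma in_dbind {A B} (m : Defs.dist A) (f : A -> Defs.dist B) p y :
  In (p, y) (dbind m f) -> exists q x r, In (q, x) m /\ In (r, y) (f x) /\ p = q * r.
Proof. unfold dbind. intros H. apply in_flat_map in H as [[q x] [Hm Hy]].
  apply in_map_iff in Hy as [[r z] [E Hz]]. simpl in E. inversion E; subst.
  exists q, x, r. auto. Qed.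

Lemma nonneg_dbind {A B} (m : Defs.dist A) (f : A -> Defs.dist B) : nonneg m ->
  (forall q x, In (q, x) m -> nonneg (f x)) -> nonneg (dbind m f).
Proof. intros Hm Hf p y H. apply in_dbind in H as (q & x & r & H1 & H2 & ->).
  apply Rmult_le_pos; [eapply Hm; eauto| eapply Hf; eauto]. Qed.

Lemma nonneg_dret {A} (x : A) : nonneg (dret x).
Proof. intros p y [H|[]]. inversion H; lra. Qed.

Lemma in_dret {A} (x : A) p y : In (p, y) (dret x) -> y = x.
Proof. intros [H|[]]. inversion H; auto. Qed.

Lemma mass_dbind {A B} (m : Defs.dist A) (f : A -> Defs.dist B) :
  mass m = 1 -> (forall q x, In (q, x) m -> mass (f x) = 1) -> mass (dbind m f) = 1.
Proof. intros Hm Hf. unfold mass at 1. rewrite wsum_dbind.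
  rewrite (wsum_ext _ _ (fun _ => 1)); [exact Hm|]. intros; eapply Hf; eauto. Qed.

Lemma mass_dret {A} (x : A) : mass (dret x) = 1.
Proof. unfold mass; rewrite wsum_dret; auto. Qed.

Lemma mass_dflip p : mass (dflip p) = 1.
Proof. unfold mass, dflip; simpl; ring. Qed.

Lemma nonneg_dflip p : 0 <= p <= 1 -> nonneg (dflip p).
Proof. intros Hp q x [H|[H|[]]]; inversion H; lra. Qed.

Lemma mass_duniform {A} (l : list A) : l <> [] -> mass (duniform l) = 1.
Proof. intros Hl. unfold mass, duniform.
  assert (E : forall k, wsum (map (fun x : A => (/ INR (length l), x)) k) (fun _ => 1)
     = INR (length k) * / INR (length l)).
  { induction k as [|y k IH]; [simpl; ring|]. cbn [map]. unfold wsum at 1; cbn [fold_right fst snd]. fold (wsum (map (fun x : A => (/ INR (length l), x)) k) (fun _ => 1)). rewrite IH. cbn [length]. rewrite S_INR. ring. }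
  rewrite E. apply Rinv_r. apply not_0_INR. destruct l; simpl; [congruence| lia]. Qed.

Lemma nonneg_duniform {A} (l : list A) : nonneg (duniform l).
Proof. intros p x H. unfold duniform in H. apply in_map_iff in H as [y [E Hy]].
  inversion E. apply Rlt_le, Rinv_0_lt_compat. destruct l; [destruct Hy|].
  simpl length; rewrite S_INR; pose proof (pos_INR (length l)); lra.
  Unshelve. all: auto. Qed.

Lemma mass_dweighted {A} (w : A -> nat) (l : list A) :
  fold_right (fun x s => (w x + s)%nat) 0%nat l <> 0%nat -> mass (dweighted w l) = 1.
Proof. intros Hl. unfold mass, dweighted. cbv zeta.
  set (W := fold_right (fun x s => (w x + s)%nat) 0%nat l) in *.
  assert (E : forall k, wsum (map (fun x : A => (INR (w x) / INR W, x)) k) (fun _ => 1)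
     = INR (fold_right (fun x s => (w x + s)%nat) 0%nat k) / INR W).
  { induction k as [|y k IH]; [simpl; unfold Rdiv; ring|]. cbn [map].
    unfold wsum at 1; cbn [fold_right fst snd].
    fold (wsum (map (fun x : A => (INR (w x) / INR W, x)) k) (fun _ => 1)).
    rewrite IH, plus_INR. unfold Rdiv; ring. }
  rewrite E. unfold Rdiv. apply Rinv_r. apply not_0_INR. exact Hl. Qed.

Lemma nonneg_dweighted {A} (w : A -> nat) (l : list A) : nonneg (dweighted w l).
Proof. intros p x H. unfold dweighted in H. apply in_map_iff in H as [y [E Hy]].
  inversion E. unfold Rdiv. apply Rmult_le_pos; [apply pos_INR|].
  destruct (fold_right (fun x s => (w x + s)%nat) 0%nat l) eqn:Ew.
  - change (INR 0) with 0. rewrite Rinv_0. lra.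
  - apply Rlt_le, Rinv_0_lt_compat. apply lt_0_INR. lia. Qed.

Lemma mass_dreplicate {A} k (m : Defs.dist A) : mass m = 1 -> mass (dreplicate k m) = 1.
Proof. intros Hm. induction k; cbn [dreplicate].
  - apply mass_dret.
  - apply mass_dbind; auto. intros q x _. apply mass_dbind; auto. intros; apply mass_dret. Qed.

Lemma nonneg_dreplicate {A} k (m : Defs.dist A) : nonneg m -> nonneg (dreplicate k m).
Proof. intros Hm. induction k; cbn [dreplicate].
  - apply nonneg_dret.
  - apply nonneg_dbind; auto. intros q x _. apply nonneg_dbind; auto. intros; apply nonneg_dret. Qed.


Definition Inv (g : graph) : Prop :=
  (exists s, seeds g = true :: s) /\ cols g <> [] /\ (0 < ncol g)%nat /\
  (forall c, (c < ncol g)%nat -> exists u, In u (color_nodes g c) /\ (0 < degree g u)%nat) /\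
  (forall x, In x (cols g) <-> (x < ncol g)%nat).

Lemma Inv_G2 : Inv G2.
Proof. split; [exists [true]; reflexivity|]. split; [discriminate|]. split; [simpl; lia|].
  split.
  - intros c Hc. simpl in Hc. destruct c as [|[|c]]; [ | | lia].
    + exists 0%nat. split; [simpl; auto| cbv; lia].
    + exists 1%nat. split; [simpl; auto| cbv; lia].
  - intros x; simpl. split; [intros [<-|[<-|[]]]; lia|]. intros H. lia. Qed.

Lemma fold_pos {A} (w : A -> nat) l u : In u l -> (0 < w u)%nat ->
  fold_right (fun x s => (w x + s)%nat) 0%nat l <> 0%nat.
Proof. induction l as [|y l IH]; simpl; [tauto|]. intros [->|H] Hw; [lia|].
  specialize (IH H Hw). lia. Qed.

Lemma in_color_nodes g c u : In u (color_nodes g c) <->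
  (u < length (cols g))%nat /\ nth u (cols g) 0%nat = c.
Proof. unfold color_nodes, nodes. rewrite filter_In, in_seq, Nat.eqb_eq. lia. Qed.

Lemma color_nodes_nodes g c u : In u (color_nodes g c) -> In u (nodes g).
Proof. unfold color_nodes. rewrite filter_In. tauto. Qed.

Lemma seed_nodes_ne g : Inv g -> seed_nodes g <> [].
Proof. intros [[s Hs] [Hc _]] H. assert (In 0%nat (seed_nodes g)).
  { unfold seed_nodes, nodes. rewrite filter_In, in_seq, Hs. simpl.
    destruct (cols g); [congruence|simpl; split; [lia|auto]]. }
  rewrite H in H0; destruct H0. Qed.

Lemma seq_ne n : (0 < n)%nat -> seq 0 n <> [].
Proof. destruct n; [lia|discriminate]. Qed.

Definition new_graph (g : graph) (us : list nat) :=
  mkGraph (cols g ++ [ncol g]) (seeds g ++ [true])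
          (edges g ++ map (fun w => (length (cols g), w)) us) (S (ncol g)).
Definition old_graph (g : graph) c (us : list nat) :=
  mkGraph (cols g ++ [c]) (seeds g ++ [false])
          (edges g ++ map (fun w => (length (cols g), w)) us) (ncol g).

Lemma step_support a d i g q g' : In (q, g') (step a d i g) ->
  (exists u us, g' = new_graph g (u :: us)) \/
  (exists c us, (c < ncol g)%nat /\ g' = old_graph g c us).
Proof. unfold step. intros H. apply in_dbind in H as (q1 & b & r1 & _ & H & _).
  destruct b.
  - apply in_dbind in H as (q2 & u & r2 & _ & H & _).
    apply in_dbind in H as (q3 & us & r3 & _ & H & _). apply in_dret in H.
    left. exists u, us. exact H.
  - apply in_dbind in H as (q2 & c & r2 & Hc & H & _).
    apply in_dbind in H as (q3 & us & r3 & _ & H & _). apply in_dret in H.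
    right. exists c, us. split; [|exact H].
    unfold duniform in Hc. apply in_map_iff in Hc as [y [E Hy]]. inversion E; subst.
    apply in_seq in Hy. lia. Qed.

Lemma step_wsum a d i g (F : nat -> R) : Inv g ->
  wsum (step a d i g) (fun g' => F (ncol g')) =
  p_new a i * F (S (ncol g)) + (1 - p_new a i) * F (ncol g).
Proof. intros HI. pose proof HI as [_ [_ [Hn [Hcn _]]]]. unfold step.
  rewrite wsum_dbind. unfold dflip. unfold wsum at 1. cbn [fold_right fst snd].
  rewrite !wsum_dbind.
  rewrite (wsum_ext _ _ (fun _ => F (S (ncol g)))).
  2:{ intros p u _. rewrite wsum_dbind.
      rewrite (wsum_ext _ _ (fun _ => F (S (ncol g)))).
      2:{ intros; rewrite wsum_dret; reflexivity. }
      rewrite wsum_const, mass_dreplicate; [ring|]. apply mass_duniform, seed_nodes_ne, HI. }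
  rewrite (wsum_ext (duniform (seq 0 (ncol g))) _ (fun _ => F (ncol g))).
  2:{ intros p c Hc. rewrite wsum_dbind.
      rewrite (wsum_ext _ _ (fun _ => F (ncol g))).
      2:{ intros; rewrite wsum_dret; reflexivity. }
      rewrite wsum_const, mass_dreplicate; [ring|].
      assert (c < ncol g)%nat.
      { unfold duniform in Hc. apply in_map_iff in Hc as [y [E Hy]]. inversion E; subst.
        apply in_seq in Hy. lia. }
      destruct (Hcn c H) as [u [Hu Hd]]. apply mass_dweighted. eapply fold_pos; eauto. }
  rewrite !wsum_const. rewrite mass_duniform by (apply seq_ne; exact Hn).
  rewrite mass_dweighted; [ring|].
  destruct (Hcn 0%nat Hn) as [u [Hu Hd]]. eapply fold_pos; [eapply color_nodes_nodes|]; eauto.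
Qed.

Lemma step_nonneg a d i g : Inv g -> 0 <= p_new a i <= 1 -> nonneg (step a d i g).
Proof. intros HI Hp. unfold step. apply nonneg_dbind; [apply nonneg_dflip; exact Hp|].
  intros q b _. destruct b.
  - apply nonneg_dbind; [apply nonneg_dweighted|]. intros. apply nonneg_dbind.
    + apply nonneg_dreplicate, nonneg_duniform.
    + intros; apply nonneg_dret.
  - apply nonneg_dbind; [apply nonneg_duniform|]. intros. apply nonneg_dbind.
    + apply nonneg_dreplicate, nonneg_dweighted.
    + intros; apply nonneg_dret.
Qed.

Lemma degree_app g cs ss E n u :
  (degree g u <= degree (mkGraph cs ss (edges g ++ E) n) u)%nat.
Proof. unfold degree; simpl. rewrite filter_app, length_app. lia. Qed.

Lemma color_nodes_app g x ss E n c u : In u (color_nodes g c) ->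
  In u (color_nodes (mkGraph (cols g ++ [x]) ss E n) c).
Proof. rewrite !in_color_nodes; simpl. rewrite length_app; simpl. intros [H1 H2].
  split; [lia|]. rewrite app_nth1; auto. Qed.

Lemma Inv_step a d i g q g' : Inv g -> In (q, g') (step a d i g) -> Inv g'.
Proof. intros HI H. destruct HI as [[s Hs] [Hc [Hn [Hcn Hcol]]]].
  apply step_support in H as [(u & us & ->) | (c & us & Hc' & ->)].
  - unfold new_graph. split; [exists (s ++ [true]); simpl; rewrite Hs; reflexivity|].
    split; [simpl; destruct (cols g); [congruence|discriminate]|].
    split; [simpl; lia|]. split.
    + simpl. intros c Hc2. destruct (Nat.eq_dec c (ncol g)) as [->|Hne].
      * exists (length (cols g)). split.
        -- rewrite in_color_nodes; simpl. rewrite length_app; simpl. split; [lia|].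
           rewrite app_nth2 by lia. rewrite Nat.sub_diag. reflexivity.
        -- unfold degree; simpl. rewrite filter_app, length_app. simpl.
           rewrite Nat.eqb_refl. simpl. lia.
      * destruct (Hcn c ltac:(lia)) as [w [Hw Hd]]. exists w. split.
        -- apply (color_nodes_app g (ncol g) _ _ _ c w Hw).
        -- eapply Nat.lt_le_trans; [exact Hd| apply degree_app].
    + simpl. intros x. rewrite in_app_iff, Hcol. simpl. split; intros; lia.
  - unfold old_graph. split; [exists (s ++ [false]); simpl; rewrite Hs; reflexivity|].
    split; [simpl; destruct (cols g); [congruence|discriminate]|].
    split; [simpl; lia|]. split.
    + simpl. intros c0 Hc2. destruct (Hcn c0 Hc2) as [w [Hw Hd]]. exists w. split.
      * apply (color_nodes_app g c _ _ _ c0 w Hw).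
      * eapply Nat.lt_le_trans; [exact Hd| apply degree_app].
    + simpl. intros x. rewrite in_app_iff, Hcol. simpl. split; intros; lia.
Qed.

Lemma ncolors_Inv g : Inv g -> ncolors g = ncol g.
Proof. intros [_ [_ [_ [_ Hcol]]]]. unfold ncolors, colors.
  assert (P : Permutation (nodup Nat.eq_dec (cols g)) (seq 0 (ncol g))).
  { apply NoDup_Permutation; [apply NoDup_nodup| apply seq_NoDup|].
    intros x. rewrite nodup_In, Hcol, in_seq. lia. }
  rewrite (Permutation_length P), length_seq. reflexivity. Qed.


Fixpoint crun (p : nat -> R) (m : nat) : Defs.dist (list nat) :=
  match m with
  | O => dret [2%nat]
  | S m' => dbind (crun p m') (fun l => dbind (dflip (p (m' + 3)%nat)) (fun b =>
             dret ((if b then S (hd 2%nat l) else hd 2%nat l) :: l)))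
  end.

Lemma run_support a d m q h : In (q, h) (run a d m) ->
  Forall Inv h /\ exists g t, h = g :: t.
Proof. revert q h; induction m as [|m IH]; intros q h H; cbn [run] in H.
  - apply in_dret in H; subst. split; [constructor; [apply Inv_G2|constructor]|eauto].
  - apply in_dbind in H as (q1 & h1 & r & H1 & H2 & _).
    destruct (IH _ _ H1) as [HF [g [t ->]]].
    apply in_dbind in H2 as (q2 & g' & r2 & H3 & H4 & _). apply in_dret in H4; subst.
    split; [|eauto]. constructor; auto. inversion HF; subst. eapply Inv_step; eauto.
Qed.

Lemma run_nonneg a d m : (forall i, (3 <= i)%nat -> 0 <= p_new a i <= 1) ->
  nonneg (run a d m).
Proof. intros Hp. induction m as [|m IH]; cbn [run]; [apply nonneg_dret|].
  apply nonneg_dbind; auto. intros q h Hh. destruct (run_support _ _ _ _ _ Hh) as [HF [g [t ->]]].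
  apply nonneg_dbind; [|intros; apply nonneg_dret]. apply step_nonneg.
  - inversion HF; auto.
  - apply Hp; lia.
Qed.

Lemma run_proj a d m : forall F : list nat -> R,
  wsum (run a d m) (fun h => F (map ncol h)) = wsum (crun (p_new a) m) F.
Proof. induction m as [|m IH]; intros F; cbn [run crun].
  - rewrite !wsum_dret. reflexivity.
  - rewrite !wsum_dbind.
    set (G := fun l =>
        p_new a (m + 3) * F (S (hd 2%nat l) :: l) + (1 - p_new a (m + 3)) * F (hd 2%nat l :: l)).
    rewrite (wsum_ext (run a d m) _ (fun h => G (map ncol h))).
    + rewrite IH. apply wsum_ext. intros p l _. rewrite wsum_dbind. unfold dflip, wsum at 1. cbn [fold_right fst snd]. rewrite !wsum_dret. unfold G. ring.
    + intros p h Hh. destruct (run_support _ _ _ _ _ Hh) as [HF [g [t ->]]].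
      rewrite wsum_dbind.
      rewrite (wsum_ext _ _ (fun g' => (fun c => F (c :: map ncol (g :: t))) (ncol g'))).
      * inversion HF; subst.
        pose proof (step_wsum a d (m + 3) g (fun c => F (c :: map ncol (g :: t))) H1) as E.
        cbv beta in E. rewrite E. unfold G. reflexivity.
      * intros; rewrite wsum_dret; reflexivity.
Qed.


Section Moments.
Variable p : nat -> R.
Hypothesis Hp : forall i, (3 <= i)%nat -> 0 <= p i <= 1.

Lemma crun_nonneg m : nonneg (crun p m).
Proof. induction m as [|m IH]; cbn [crun]; [apply nonneg_dret|].
  apply nonneg_dbind; auto. intros. apply nonneg_dbind; [apply nonneg_dflip, Hp; lia|].
  intros; apply nonneg_dret. Qed.

Lemma crun_step m F : wsum (crun p (S m)) F =
  wsum (crun p m) (fun l => p (m + 3)%nat * F (S (hd 2%nat l) :: l)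
                          + (1 - p (m + 3)%nat) * F (hd 2%nat l :: l)).
Proof. cbn [crun]. rewrite wsum_dbind. apply wsum_ext. intros q l _.
  rewrite wsum_dbind. unfold dflip, wsum at 1. cbn [fold_right fst snd].
  rewrite !wsum_dret. ring. Qed.

Lemma crun_mass m : mass (crun p m) = 1.
Proof. induction m as [|m IH]; [apply mass_dret|]. unfold mass in *. rewrite crun_step.
  rewrite (wsum_ext _ _ (fun _ => 1)); [exact IH|]. intros; ring. Qed.

Lemma crun_marg j : forall k F,
  wsum (crun p (j + k)) (fun l => F (nth k l 2%nat)) = wsum (crun p j) (fun l => F (hd 2%nat l)).
Proof. induction k as [|k IH]; intros F.
  - rewrite Nat.add_0_r. apply wsum_ext. intros q l _. destruct l; reflexivity.
  - rewrite Nat.add_succ_r, crun_step.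
    rewrite <- IH. apply wsum_ext. intros q l _. simpl. ring. Qed.

Fixpoint mu (j : nat) : R := match j with O => 2 | S j' => mu j' + p (j' + 3)%nat end.
Fixpoint V (j : nat) : R := match j with O => 0 | S j' => V j' + p (j' + 3)%nat * (1 - p (j' + 3)%nat) end.

Definition X (l : list nat) : R := INR (hd 2%nat l).

Lemma M1 j : wsum (crun p j) (fun l => X l - mu j) = 0.
Proof. induction j as [|j IH].
  - cbn [crun]; rewrite wsum_dret. unfold X; simpl. ring.
  - rewrite crun_step. rewrite <- IH. apply wsum_ext. intros q l _.
    unfold X; simpl hd. rewrite S_INR. simpl mu. ring. Qed.

Lemma M2 j : wsum (crun p j) (fun l => (X l - mu j) ^ 2) = V j.
Proof. induction j as [|j IH].
  - cbn [crun]; rewrite wsum_dret. unfold X; simpl. ring.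
  - rewrite crun_step. simpl V. rewrite <- IH.
    transitivity (wsum (crun p j) (fun l => (X l - mu j) ^ 2 + p (j + 3)%nat * (1 - p (j + 3)%nat))).
    + apply wsum_ext. intros q l _.
      unfold X; simpl hd. rewrite S_INR. simpl mu. ring.
    + rewrite wsum_plus, wsum_const, crun_mass. ring. Qed.

Lemma V_nonneg j : 0 <= V j.
Proof. induction j; simpl; [lra|]. pose proof (Hp (j + 3)%nat ltac:(lia)). nra. Qed.

Lemma V_le_mu j : V j <= mu j.
Proof. induction j; simpl; [lra|]. pose proof (Hp (j + 3)%nat ltac:(lia)). nra. Qed.

Lemma mu_ge2 j : 2 <= mu j.
Proof. induction j; simpl; [lra|]. pose proof (Hp (j + 3)%nat ltac:(lia)). lra. Qed.

Lemma M4 j : wsum (crun p j) (fun l => (X l - mu j) ^ 4) <= 3 * V j ^ 2 + V j.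
Proof. induction j as [|j IH].
  - cbn [crun]; rewrite wsum_dret. unfold X; simpl. lra.
  - rewrite crun_step. simpl V. set (q := p (j + 3)%nat).
    assert (Hq : 0 <= q <= 1) by (apply Hp; lia).
    set (r := q * (1 - q) ^ 3 - (1 - q) * q ^ 3).
    set (s := q * (1 - q) ^ 4 + (1 - q) * q ^ 4).
    rewrite (wsum_ext _ _ (fun l => (X l - mu j) ^ 4 + (6 * (q * (1 - q)) * (X l - mu j) ^ 2
               + (4 * r * (X l - mu j) + s * 1)))).
    2:{ intros a l _. unfold X; simpl hd. rewrite S_INR. simpl mu. fold q. unfold r, s. ring. }
    rewrite !wsum_plus, !wsum_scal. rewrite M1, M2. fold (mass (crun p j)). rewrite crun_mass.
    assert (s <= q * (1 - q)).
    { assert (E : s = q * (1 - q) * (1 - 3 * (q * (1 - q)))) by (unfold s; ring).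
      rewrite E. assert (0 <= q * (1 - q)) by nra. nra. }
    pose proof (V_nonneg j). set (w := q * (1 - q)) in *. set (E4 := wsum _ _) in *.
    assert (0 <= w * w) by (apply Rle_0_sqr). nra. Qed.

Definition Rleb' := Rleb.

Lemma markov4 j lam : 0 < lam ->
  dprob (crun p j) (fun l => Rleb lam (Rabs (X l - mu j))) <= (3 * V j ^ 2 + V j) / lam ^ 4.
Proof. intros Hl. rewrite dprob_wsum.
  eapply Rle_trans; [apply (wsum_le _ _ (fun l => (X l - mu j) ^ 4 / lam ^ 4)); [apply crun_nonneg|]|].
  - intros q l _. unfold Rleb. destruct (Rle_dec lam (Rabs (X l - mu j))) as [H|H].
    + apply (Rmult_le_reg_r (lam ^ 4)); [apply pow_lt; lra|]. unfold Rdiv.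
      rewrite Rmult_assoc, Rinv_l by (apply pow_nonzero; lra). rewrite Rmult_1_r, Rmult_1_l.
      replace ((X l - mu j) ^ 4) with (Rabs (X l - mu j) ^ 4)
        by (rewrite RPow_abs; apply Rabs_right; apply Rle_ge; replace 4%nat with (2*2)%nat by lia;
            rewrite pow_mult; apply pow2_ge_0).
      apply pow_incr; lra.
    + unfold Rdiv. apply Rmult_le_pos; [replace 4%nat with (2*2)%nat by lia;
            rewrite pow_mult; apply pow2_ge_0|]. apply Rlt_le, Rinv_0_lt_compat, pow_lt; lra.
  - rewrite (wsum_ext _ _ (fun l => / lam ^ 4 * (X l - mu j) ^ 4)) by (intros; unfold Rdiv; ring).
    rewrite wsum_scal. unfold Rdiv. rewrite (Rmult_comm (3 * V j ^ 2 + V j)). apply Rmult_le_compat_l.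
    + apply Rlt_le, Rinv_0_lt_compat, pow_lt; lra.
    + apply M4.
Qed.
End Moments.


Lemma ln_le' x y : 0 < x -> x <= y -> ln x <= ln y.
Proof. intros Hx [H|H]; [left; apply ln_increasing; auto| subst; lra]. Qed.

Lemma exp_le' x y : x <= y -> exp x <= exp y.
Proof. intros [H|H]; [left; apply exp_increasing; auto| subst; lra]. Qed.

Lemma ln_ge1 x : 3 <= x -> 1 <= ln x.
Proof. intros H. rewrite <- (ln_exp 1). apply ln_le'; [apply exp_pos|].
  pose proof exp_le_3. lra. Qed.

Lemma ln_le_sub1 x : 0 < x -> ln x <= x - 1.
Proof. intros H. pose proof (exp_ineq1_le (ln x)). rewrite exp_ln in H0; lra. Qed.

Definition P (a x : R) := Rpower (ln x) (- a).

Lemma P_bounds a x : 0 < a -> 3 <= x -> 0 < P a x <= 1.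
Proof. intros Ha Hx. unfold P, Rpower. split; [apply exp_pos|].
  rewrite <- exp_0. apply exp_le'. pose proof (ln_ge1 x Hx).
  assert (0 <= ln (ln x)) by (rewrite <- ln_1; apply ln_le'; lra). nra. Qed.

Lemma P_decr a x y : 0 < a -> 3 <= x -> x <= y -> P a y <= P a x.
Proof. intros Ha Hx Hy. unfold P, Rpower. apply exp_le'.
  pose proof (ln_ge1 x Hx). assert (ln x <= ln y) by (apply ln_le'; lra).
  assert (ln (ln x) <= ln (ln y)) by (apply ln_le'; lra). nra. Qed.

Lemma ln_pow_sqrt c x : 0 < c -> 3 <= x ->
  Rpower (ln x) c <= Rpower (2 * c) c * sqrt x.
Proof. intros Hc Hx. set (y := Rpower x (/ (2 * c))).
  assert (Hy : 0 < y) by apply exp_pos.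
  assert (Hly : ln y = ln x / (2 * c)) by (unfold y; rewrite ln_Rpower; field; lra).
  pose proof (ln_le_sub1 y Hy). pose proof (ln_ge1 x Hx).
  assert (ln x <= 2 * c * y).
  { assert (ln x = 2 * c * ln y) by (rewrite Hly; field; lra). nra. }
  apply Rle_trans with (Rpower (2 * c * y) c).
  - apply Rle_Rpower_l; lra.
  - rewrite <- Rpower_mult_distr by lra. apply Rmult_le_compat_l; [left; apply exp_pos|].
    unfold y. rewrite Rpower_mult. replace (/ (2 * c) * c) with (/ 2) by (field; lra).
    rewrite Rpower_sqrt by lra. lra. Qed.

Lemma exp_le_inv x : 0 <= x < 1 -> exp x <= / (1 - x).
Proof. intros H. pose proof (exp_ineq1_le (- x)).
  rewrite exp_Ropp in H0. assert (0 < exp x) by apply exp_pos.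
  apply (Rmult_le_reg_r (1 - x)); [lra|]. rewrite Rinv_l by lra.
  apply (Rmult_le_reg_l (/ exp x)); [apply Rinv_0_lt_compat; lra|].
  rewrite <- Rmult_assoc, Rinv_l by lra. lra. Qed.

Lemma ln_div x y : 0 < x -> 0 < y -> ln (x / y) = ln x - ln y.
Proof. intros. unfold Rdiv. rewrite ln_mult, ln_Rinv; try lra.
  apply Rinv_0_lt_compat; lra. Qed.

Lemma P_step a t : 1 < a -> 3 <= t -> 6 * a <= ln t ->
  P a t <= P a (t + 1) * (1 + / (3 * t)).
Proof. intros Ha Ht Hl.
  set (x := a * (ln (ln (t + 1)) - ln (ln t))).
  assert (E : P a t = P a (t + 1) * exp x).
  { unfold P, Rpower, x. rewrite <- exp_plus. f_equal. ring. }
  pose proof (ln_ge1 t Ht) as Hlt.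
  assert (Hlt1 : ln t <= ln (t + 1)) by (apply ln_le'; lra).
  assert (H1 : ln (t + 1) - ln t <= / t).
  { rewrite <- ln_div by lra. pose proof (ln_le_sub1 ((t + 1) / t) ltac:(apply Rdiv_lt_0_compat; lra)).
    replace ((t + 1) / t - 1) with (/ t) in H by (field; lra). exact H. }
  assert (H2 : ln (ln (t + 1)) - ln (ln t) <= (ln (t + 1) - ln t) / ln t).
  { rewrite <- ln_div by lra. pose proof (ln_le_sub1 (ln (t + 1) / ln t) ltac:(apply Rdiv_lt_0_compat; lra)).
    replace (ln (t + 1) / ln t - 1) with ((ln (t + 1) - ln t) / ln t) in H by (field; lra). exact H. }
  assert (H3 : 0 <= ln (ln (t + 1)) - ln (ln t)).
  { assert (ln (ln t) <= ln (ln (t + 1))) by (apply ln_le'; lra). lra. }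
  assert (Hx0 : 0 <= x) by (unfold x; nra).
  assert (Hx1 : x <= / (6 * t)).
  { unfold x. apply Rle_trans with (a * ((/ t) / ln t)).
    - apply Rmult_le_compat_l; [lra|]. eapply Rle_trans; [exact H2|].
      unfold Rdiv. apply Rmult_le_compat_r; [left; apply Rinv_0_lt_compat; lra|exact H1].
    - unfold Rdiv. rewrite Rinv_mult. 
      apply Rle_trans with (a * (/ t * / (6 * a))).
      + apply Rmult_le_compat_l; [lra|]. apply Rmult_le_compat_l; [left; apply Rinv_0_lt_compat; lra|].
        apply Rinv_le_contravar; lra.
      + right. field. lra. }
  assert (Ht6 : / (6 * t) <= / 18) by (apply Rinv_le_contravar; lra).
  assert (Hex : exp x <= 1 + / (3 * t)).
  { eapply Rle_trans; [apply exp_le_inv; lra|].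
    assert (/ (1 - x) <= 1 + 2 * x).
    { apply (Rmult_le_reg_r (1 - x)); [lra|]. rewrite Rinv_l by lra. nra. }
    replace (/ (3 * t)) with (2 * / (6 * t)) by (field; lra). lra. }
  rewrite E. apply Rmult_le_compat_l; [left; apply P_bounds; lra|exact Hex]. Qed.


Section Det.
Variable a : R.
Hypothesis Ha : 1 < a.
Let p := fun i : nat => P a (INR i).

Lemma INR_ge3 i : (3 <= i)%nat -> 3 <= INR i.
Proof. intros H. replace 3 with (INR 3) by (simpl; ring). apply le_INR; exact H. Qed.

Lemma p_bounds i : (3 <= i)%nat -> 0 <= p i <= 1.
Proof. intros H. pose proof (P_bounds a (INR i) ltac:(lra) (INR_ge3 i H)). unfold p; lra. Qed.

Lemma mu_lower j : (1 <= j)%nat -> INR (j + 2) * p (j + 2)%nat <= mu p j.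
Proof. induction j as [|j IH]; intros Hj; [lia|].
  destruct (Nat.eq_dec j 0) as [->|Hj0].
  - simpl mu. pose proof (p_bounds 3 ltac:(lia)). simpl (0+3)%nat. simpl (1+2)%nat.
    replace (INR 3) with 3 by (simpl; ring). lra.
  - specialize (IH ltac:(lia)). simpl mu.
    assert (Hdec : p (S j + 2)%nat <= p (j + 2)%nat).
    { unfold p. apply P_decr; [lra| apply INR_ge3; lia| apply le_INR; lia]. }
    replace (S j + 2)%nat with (j + 3)%nat in * by lia.
    rewrite (plus_INR j 3), (plus_INR j 2) in *. simpl (INR 3) in *. simpl (INR 2) in *.
    pose proof (pos_INR j). pose proof (p_bounds (j + 3) ltac:(lia)). nra.
Qed.

Lemma mu_upper j0 : (1 <= j0)%nat -> exp (6 * a) <= INR (j0 + 2) ->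
  forall k, mu p (j0 + k) - 3 / 2 * (INR (j0 + k + 2) * p (j0 + k + 2)%nat)
            <= mu p j0 - 3 / 2 * (INR (j0 + 2) * p (j0 + 2)%nat).
Proof. intros Hj0 He k. induction k as [|k IH].
  - rewrite Nat.add_0_r. lra.
  - rewrite Nat.add_succ_r. simpl mu.
    set (t := INR (j0 + k + 2)).
    assert (Ht3 : 3 <= t) by (apply INR_ge3; lia).
    assert (Hl : 6 * a <= ln t).
    { rewrite <- (ln_exp (6 * a)). apply ln_le'; [apply exp_pos|]. eapply Rle_trans; [exact He|].
      apply le_INR; lia. }
    pose proof (P_step a t Ha Ht3 Hl) as Hs.
    replace (j0 + k + 3)%nat with (S (j0 + k) + 2)%nat by lia.
    replace (INR (S (j0 + k) + 2)) with (t + 1) by (unfold t; rewrite <- S_INR; f_equal; lia).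
    replace (p (S (j0 + k) + 2)%nat) with (P a (t + 1))
      by (unfold p, t; f_equal; rewrite <- S_INR; f_equal; lia).
    replace (p (j0 + k + 2)%nat) with (P a t) in IH by reflexivity. fold t in IH.
    assert (t * P a t <= t * P a (t + 1) + P a (t + 1) / 3).
    { replace (t * P a (t + 1) + P a (t + 1) / 3) with (t * (P a (t + 1) * (1 + / (3 * t))))
        by (field; lra). apply Rmult_le_compat_l; lra. }
    lra.
Qed.
End Det.


Definition Hf (T x : R) := / sqrt (Rmax x (T - 1)).

Lemma Hf_le T x : 1 < T -> Hf T x <= / sqrt (T - 1).
Proof. intros HT. unfold Hf. apply Rinv_le_contravar; [apply sqrt_lt_R0; lra|].
  apply sqrt_le_1_alt. apply Rmax_r. Qed.

Lemma Hf_nonneg T x : 1 < T -> 0 <= Hf T x.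
Proof. intros HT. unfold Hf. left; apply Rinv_0_lt_compat, sqrt_lt_R0.
  pose proof (Rmax_r x (T - 1)). lra. Qed.

Lemma tele_term T t : 1 < T ->
  (if Rleb T t then / (t * sqrt t) else 0) <= 2 * (Hf T (t - 1) - Hf T t).
Proof. intros HT. unfold Rleb. destruct (Rle_dec T t) as [H|H].
  - unfold Hf. rewrite !Rmax_left by lra.
    set (u := sqrt (t - 1)). set (v := sqrt t).
    assert (Hu : 0 < u) by (apply sqrt_lt_R0; lra).
    assert (Hv : 0 < v) by (apply sqrt_lt_R0; lra).
    assert (Hu2 : u * u = t - 1) by (apply sqrt_sqrt; lra).
    assert (Hv2 : v * v = t) by (apply sqrt_sqrt; lra).
    assert (Huv : u <= v) by (apply sqrt_le_1_alt; lra).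
    replace t with (v * v) at 1 by exact Hv2.
    assert (Hd : v - u = / (u + v)) by (field_simplify_eq; [nra| lra]).
    assert (2 * (/ u - / v) = 2 * (v - u) / (u * v)) by (field; lra).
    rewrite H0, Hd.
    apply (Rmult_le_reg_r (u * v * v * v * (u + v))).
    { repeat apply Rmult_lt_0_compat; lra. }
    field_simplify; try lra. nra.
  - assert (Hf T (t - 1) = / sqrt (T - 1)) by (unfold Hf; rewrite Rmax_right by lra; reflexivity).
    pose proof (Hf_le T t HT). lra.
Qed.

Lemma tele_sum T : forall k s,
  fold_right (fun t acc => 2 * (Hf T (INR t - 1) - Hf T (INR t)) + acc) 0 (seq s k)
  = 2 * (Hf T (INR s - 1) - Hf T (INR (s + k) - 1)).
Proof. induction k as [|k IH]; intros s; simpl.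
  - rewrite Nat.add_0_r. ring.
  - rewrite IH. rewrite S_INR. replace (s + S k)%nat with (S s + k)%nat by lia.
    replace (INR s + 1 - 1) with (INR s) by ring. ring. Qed.

Lemma fold_le {X} (f g : X -> R) l : (forall x, In x l -> f x <= g x) ->
  fold_right (fun t acc => f t + acc) 0 l <= fold_right (fun t acc => g t + acc) 0 l.
Proof. induction l as [|x l IH]; simpl; intros H; [lra|].
  pose proof (H x (or_introl eq_refl)). assert (fold_right (fun t acc => f t + acc) 0 l <= fold_right (fun t acc => g t + acc) 0 l) by (apply IH; auto). lra. Qed.

Lemma sum_bound T k s : 1 < T ->
  fold_right (fun t acc => (if Rleb T (INR t) then / (INR t * sqrt (INR t)) else 0) + acc) 0 (seq s k)
  <= 2 / sqrt (T - 1).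
Proof. intros HT. eapply Rle_trans.
  - apply (fold_le _ (fun t => 2 * (Hf T (INR t - 1) - Hf T (INR t)))). intros; apply tele_term; auto.
  - rewrite tele_sum. pose proof (Hf_le T (INR s - 1) HT). pose proof (Hf_nonneg T (INR (s + k) - 1) HT).
    unfold Rdiv. lra. Qed.


Lemma forallb_ext' {X} (f g : X -> bool) l : (forall x, f x = g x) -> forallb f l = forallb g l.
Proof. intros H; induction l; simpl; auto. rewrite H, IHl; auto. Qed.

Lemma ncolors_nth h k : Forall Inv h -> ncolors (nth k h G2) = nth k (map ncol h) 2%nat.
Proof. revert k; induction h as [|g h IH]; intros k HF.
  - destruct k; reflexivity.
  - inversion HF; subst. destruct k; simpl; [apply ncolors_Inv; auto| apply IH; auto]. Qed.

Definition E' (a : R) (n : nat) (l : list nat) : bool :=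
  forallb (fun t =>
     orb (negb (Rleb (Rpower (ln (INR n)) (a + 1)) (INR t)))
     (andb (Rleb (INR t / (2 * Rpower (ln (INR t)) a)) (INR (nth (n - t) l 2%nat)))
           (Rleb (INR (nth (n - t) l 2%nat)) (2 * INR t / Rpower (ln (INR t)) a))))
   (seq 2 (n - 1)).

Lemma step1 a d n : dprob (history a d n) (color_bound_event a n) =
  wsum (crun (p_new a) (n - 2)) (fun l => if E' a n l then 1 else 0).
Proof. rewrite dprob_wsum. unfold history.
  transitivity (wsum (run a d (n - 2)) (fun h => (fun l => if E' a n l then 1 else 0) (map ncol h))).
  - apply wsum_ext. intros q h Hh. destruct (run_support _ _ _ _ _ Hh) as [HF _].
    unfold color_bound_event, E', G_at. erewrite forallb_ext'; [reflexivity|].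
    intros t. rewrite ncolors_nth by exact HF. reflexivity.
  - apply (run_proj a d (n - 2) (fun l => if E' a n l then 1 else 0)).
Qed.

Lemma forallb_ind (f : nat -> bool) (B : nat -> R) ts :
  (forall t, In t ts -> 0 <= B t) -> (forall t, In t ts -> f t = false -> 1 <= B t) ->
  1 - fold_right (fun t s => B t + s) 0 ts <= (if forallb f ts then 1 else 0).
Proof. induction ts as [|t ts IH]; simpl; intros H0 H1; [lra|].
  assert (Hs : 0 <= fold_right (fun t s => B t + s) 0 ts).
  { clear IH H1. induction ts as [|u ts IH2]; simpl; [lra|].
    pose proof (H0 u (or_intror (or_introl eq_refl))).
    assert (0 <= fold_right (fun t s => B t + s) 0 ts) by (apply IH2; intros; apply H0; simpl in *; tauto). lra. }
  destruct (f t) eqn:Ef; simpl.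
  - pose proof (H0 t (or_introl eq_refl)).
    assert (1 - fold_right (fun t s => B t + s) 0 ts <= (if forallb f ts then 1 else 0)) by (apply IH; auto).
    lra.
  - pose proof (H1 t (or_introl eq_refl) Ef). lra. Qed.

Lemma core (p : nat -> R) (Hp : forall i, (3 <= i)%nat -> 0 <= p i <= 1) (n : nat) (T1 : R)
  (good : nat -> R -> bool) (K : R) : 1 < T1 -> 0 <= K ->
  (forall t, In t (seq 2 (n - 1)) -> Rleb T1 (INR t) = true ->
     (forall x, Rabs (x - mu p (t - 2)) < mu p (t - 2) / 4 -> good t x = true) /\
     1024 / (mu p (t - 2)) ^ 2 <= K / (INR t * sqrt (INR t))) ->
  1 - K * (2 / sqrt (T1 - 1)) <=
  wsum (crun p (n - 2)) (fun l => if forallb (fun t => orb (negb (Rleb T1 (INR t)))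
         (good t (INR (nth (n - t) l 2%nat)))) (seq 2 (n - 1)) then 1 else 0).
Proof. intros HT HK Hgood.
  set (B := fun t l => if Rleb T1 (INR t) then
     (if Rleb (mu p (t - 2) / 4) (Rabs (INR (nth (n - t) l 2%nat) - mu p (t - 2))) then 1 else 0) else 0).
  eapply Rle_trans; [|apply (wsum_le _ (fun l => 1 + (-1) * fold_right (fun t s => B t l + s) 0 (seq 2 (n - 1))))].
  3:{ intros q l _. replace (1 + -1 * fold_right (fun t s => B t l + s) 0 (seq 2 (n - 1)))
       with (1 - fold_right (fun t s => B t l + s) 0 (seq 2 (n - 1))) by ring.
      apply forallb_ind.
      - intros t _. unfold B. destruct (Rleb _ _); [destruct (Rleb _ _)|]; lra.
      - intros t Ht Hf. apply Bool.orb_false_iff in Hf as [H1 H2].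
        apply Bool.negb_false_iff in H1. unfold B. rewrite H1.
        destruct (Hgood t Ht H1) as [Hg _]. unfold Rleb at 1. destruct (Rle_dec _ _) as [|Hn]; [lra|].
        exfalso. rewrite Hg in H2; [discriminate|]. lra. }
  2:{ apply crun_nonneg; auto. }
  rewrite wsum_plus, wsum_const, crun_mass. rewrite wsum_scal, wsum_sum.
  assert (fold_right (fun t s => wsum (crun p (n - 2)) (B t) + s) 0 (seq 2 (n - 1))
     <= fold_right (fun t s => K * (if Rleb T1 (INR t) then / (INR t * sqrt (INR t)) else 0) + s) 0 (seq 2 (n - 1))).
  { apply (fold_le (fun t => wsum (crun p (n - 2)) (B t))
                   (fun t => K * (if Rleb T1 (INR t) then / (INR t * sqrt (INR t)) else 0))).
    intros t Ht. unfold B. destruct (Rleb T1 (INR t)) eqn:E.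
    2:{ rewrite wsum_const. lra. }
    destruct (Hgood t Ht E) as [_ Hb].
    assert (Htn : (2 <= t <= n)%nat) by (apply in_seq in Ht; lia).
    replace (n - 2)%nat with ((t - 2) + (n - t))%nat by lia.
    pose proof (crun_marg p (t - 2) (n - t)
       (fun x => if Rleb (mu p (t - 2) / 4) (Rabs (INR x - mu p (t - 2))) then 1 else 0)) as Em.
    cbv beta in Em. rewrite Em. clear Em.
    pose proof (markov4 p Hp (t - 2) (mu p (t - 2) / 4)) as Hm.
    rewrite dprob_wsum in Hm. unfold X in Hm.
    pose proof (mu_ge2 p Hp (t - 2)). pose proof (V_le_mu p Hp (t - 2)). pose proof (V_nonneg p Hp (t - 2)).
    eapply Rle_trans; [apply Hm; lra|].
    set (m := mu p (t - 2)) in *. set (v := V p (t - 2)) in *.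
    apply Rle_trans with (4 * m ^ 2 / (m / 4) ^ 4).
    - unfold Rdiv. apply Rmult_le_compat_r; [left; apply Rinv_0_lt_compat, pow_lt; lra| nra].
    - replace (4 * m ^ 2 / (m / 4) ^ 4) with (1024 / m ^ 2) by (field; lra).
      unfold Rdiv in Hb |- *. exact Hb. }
  assert (Hsc : forall (f : nat -> R) l, fold_right (fun t s => K * f t + s) 0 l = K * fold_right (fun t s => f t + s) 0 l).
  { intros f l; induction l; simpl; [ring|]. rewrite IHl; ring. }
  rewrite Hsc in H. pose proof (sum_bound T1 (n - 1) 2 HT).
  assert (K * fold_right (fun t s => (if Rleb T1 (INR t) then / (INR t * sqrt (INR t)) else 0) + s) 0 (seq 2 (n - 1))
          <= K * (2 / sqrt (T1 - 1))) by (apply Rmult_le_compat_l; auto).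
  lra.
Qed.

Definition goodf (a : R) (t : nat) (x : R) : bool :=
  andb (Rleb (INR t / (2 * Rpower (ln (INR t)) a)) x) (Rleb x (2 * INR t / Rpower (ln (INR t)) a)).

Lemma Rleb_true x y : x <= y -> Rleb x y = true.
Proof. unfold Rleb; destruct (Rle_dec x y); auto; contradiction. Qed.

Lemma det_t a (Ha : 1 < a) j0 t : (1 <= j0)%nat -> exp (6 * a) <= INR (j0 + 2) ->
  3 <= INR t -> INR (j0 + 2) <= INR t ->
  (10 * mu (fun i => P a (INR i)) j0 * Rpower (2 * a) a) ^ 2 <= INR t ->
  (forall x, Rabs (x - mu (fun i => P a (INR i)) (t - 2)) < mu (fun i => P a (INR i)) (t - 2) / 4 ->
     goodf a t x = true) /\
  1024 / (mu (fun i => P a (INR i)) (t - 2)) ^ 2 <= 1024 * Rpower (2 * (2 * a)) (2 * a) / (INR t * sqrt (INR t)).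
Proof. intros Hj0 He Ht3 Htj Htb.
  set (pp := fun i => P a (INR i)).
  assert (Ht3n : (3 <= t)%nat) by (apply INR_le; simpl; lra).
  assert (Htjn : (j0 + 2 <= t)%nat) by (apply INR_le; lra).
  set (tt := INR t) in *.
  set (R0 := Rpower (ln tt) a).
  assert (HlnT : 1 <= ln tt) by (apply ln_ge1; lra).
  assert (HR0 : 0 < R0) by apply exp_pos.
  set (g := tt / R0).
  assert (Hg : INR (t - 2 + 2) * pp (t - 2 + 2)%nat = g).
  { replace (t - 2 + 2)%nat with t by lia. unfold pp, P, g, R0. rewrite Rpower_Ropp. reflexivity. }
  pose proof (mu_lower a Ha (t - 2) ltac:(lia)) as Hlow. fold pp in Hlow. rewrite Hg in Hlow.
  pose proof (mu_upper a Ha j0 Hj0 He (t - 2 - j0)) as Hup. fold pp in Hup.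
  replace (j0 + (t - 2 - j0))%nat with (t - 2)%nat in Hup by lia.
  replace (t - 2 + 2)%nat with t in Hg by lia.
  assert (E2 : (t - 2 + 2)%nat = t) by lia.
  replace (INR (t - 2 + 2) * pp (t - 2 + 2)%nat) with g in Hup by (rewrite <- Hg; rewrite E2; reflexivity).
  set (C0 := mu pp j0) in *. set (K1 := Rpower (2 * a) a) in *.
  assert (HC0 : 2 <= C0) by (apply mu_ge2; intros; apply p_bounds; auto).
  assert (Hg0 : 0 <= INR (j0 + 2) * pp (j0 + 2)%nat).
  { apply Rmult_le_pos; [apply pos_INR|]. unfold pp; left; apply P_bounds; [lra|]. apply INR_ge3; lia. }
  assert (HK1 : 0 < K1) by apply exp_pos.
  assert (HR0K : R0 <= K1 * sqrt tt) by (apply ln_pow_sqrt; lra).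
  assert (Hs : 0 < sqrt tt) by (apply sqrt_lt_R0; lra).
  assert (Hss : sqrt tt * sqrt tt = tt) by (apply sqrt_sqrt; lra).
  assert (Hgs : sqrt tt / K1 <= g).
  { unfold g. apply (Rmult_le_reg_r (K1 * R0)); [nra|].
    replace (sqrt tt / K1 * (K1 * R0)) with (sqrt tt * R0) by (field; lra).
    replace (tt / R0 * (K1 * R0)) with (sqrt tt * (K1 * sqrt tt))
      by (transitivity (K1 * tt); [rewrite <- Hss at 3; ring| field; lra]).
    apply Rmult_le_compat_l; lra. }
  assert (Hsq : 10 * C0 * K1 <= sqrt tt).
  { rewrite <- (sqrt_pow2 (10 * C0 * K1)) by nra. apply sqrt_le_1_alt; exact Htb. }
  assert (HC0g : C0 <= g / 10).
  { assert (10 * C0 <= sqrt tt / K1).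
    { apply (Rmult_le_reg_r K1); [lra|]. replace (sqrt tt / K1 * K1) with (sqrt tt) by (field; lra). lra. }
    lra. }
  assert (Hgpos : 0 < g) by (unfold g; apply Rdiv_lt_0_compat; lra).
  set (m := mu pp (t - 2)) in *.
  assert (Hmu : m <= 8 / 5 * g) by lra.
  split.
  - intros x Hx. apply Rabs_def2 in Hx as [Hx1 Hx2]. unfold goodf. fold tt. fold R0.
    rewrite !Rleb_true; auto.
    + replace (2 * tt / R0) with (2 * g) by (unfold g; field; lra). lra.
    + replace (tt / (2 * R0)) with (g / 2) by (unfold g; field; lra). lra.
  - set (K2 := Rpower (2 * (2 * a)) (2 * a)).
    assert (HR2 : R0 * R0 <= K2 * sqrt tt).
    { unfold R0, K2. rewrite <- Rpower_plus. replace (a + a) with (2 * a) by ring.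
      apply ln_pow_sqrt; lra. }
    apply Rle_trans with (1024 / g ^ 2).
    + unfold Rdiv. apply Rmult_le_compat_l; [lra|]. apply Rinv_le_contravar; [nra|].
      apply pow_incr; lra.
    + replace (1024 / g ^ 2) with (1024 * (R0 * R0) / (tt * tt)) by (unfold g; field; lra).
      replace (1024 * K2 / (tt * sqrt tt)) with (1024 * (K2 * sqrt tt) / (tt * tt))
        by (assert (tt * tt = tt * sqrt tt * sqrt tt) by (rewrite Rmult_assoc, Hss; ring);
            rewrite H; field; lra).
      unfold Rdiv. apply Rmult_le_compat_r; [left; apply Rinv_0_lt_compat; nra| lra].
Qed.

Lemma Rleb_true_inv x y : Rleb x y = true -> x <= y.
Proof. unfold Rleb; destruct (Rle_dec x y); auto; discriminate. Qed.

Theorem lemma2 (a : R) (d : nat) (ha : 1 < a) (hd : (4 <= d)%nat) :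
  forall eps : R, 0 < eps ->
  exists N : nat, forall n : nat, (N <= n)%nat ->
    1 - eps <= dprob (history a d n) (color_bound_event a n).
Proof.
  intros eps Heps.
  set (pp := fun i => P a (INR i)).
  assert (Hp : forall i, (3 <= i)%nat -> 0 <= pp i <= 1) by (intros; apply p_bounds; auto).
  destruct (INR_archimed 1 (exp (6 * a))) as [m0 Hm0]; [lra|].
  set (j0 := S m0).
  assert (He : exp (6 * a) <= INR (j0 + 2)).
  { assert (INR m0 <= INR (j0 + 2)) by (apply le_INR; unfold j0; lia). lra. }
  set (C0 := mu pp j0). set (K1 := Rpower (2 * a) a).
  set (K2 := Rpower (2 * (2 * a)) (2 * a)). set (K := 1024 * K2).
  assert (HK : 0 <= K) by (unfold K; pose proof (exp_pos ((2 * a) * ln (2 * (2 * a)))); unfold K2, Rpower; lra).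
  set (Tstar := Rmax (Rmax 3 (INR (j0 + 2))) (Rmax ((10 * C0 * K1) ^ 2) (1 + (2 * K / eps) ^ 2))).
  destruct (INR_archimed 1 (exp (Rmax Tstar 1))) as [N HN]; [lra|].
  exists N. intros n Hn.
  assert (HnN : INR N <= INR n) by (apply le_INR; exact Hn).
  assert (Hln : Rmax Tstar 1 < ln (INR n)).
  { rewrite <- (ln_exp (Rmax Tstar 1)). apply ln_increasing; [apply exp_pos| lra]. }
  pose proof (Rmax_l Tstar 1). pose proof (Rmax_r Tstar 1).
  set (T1 := Rpower (ln (INR n)) (a + 1)).
  assert (HT1 : ln (INR n) <= T1).
  { unfold T1. rewrite <- (Rpower_1 (ln (INR n))) at 1 by lra. apply Rle_Rpower; lra. }
  assert (HTs : Tstar <= T1) by lra.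
  assert (Hm1 := Rmax_l (Rmax 3 (INR (j0 + 2))) (Rmax ((10 * C0 * K1) ^ 2) (1 + (2 * K / eps) ^ 2))).
  assert (Hm2 := Rmax_r (Rmax 3 (INR (j0 + 2))) (Rmax ((10 * C0 * K1) ^ 2) (1 + (2 * K / eps) ^ 2))).
  pose proof (Rmax_l 3 (INR (j0 + 2))). pose proof (Rmax_r 3 (INR (j0 + 2))).
  pose proof (Rmax_l ((10 * C0 * K1) ^ 2) (1 + (2 * K / eps) ^ 2)).
  pose proof (Rmax_r ((10 * C0 * K1) ^ 2) (1 + (2 * K / eps) ^ 2)).
  fold Tstar in Hm1, Hm2.
  assert (HT1g : 1 < T1) by lra.
  rewrite step1. change (p_new a) with pp.
  apply Rle_trans with (1 - K * (2 / sqrt (T1 - 1))).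
  - assert (Hsq : 2 * K / eps <= sqrt (T1 - 1)).
    { rewrite <- (sqrt_pow2 (2 * K / eps)).
      - apply sqrt_le_1_alt. lra.
      - apply Rmult_le_pos; [lra| left; apply Rinv_0_lt_compat; lra]. }
    assert (Hs : 0 < sqrt (T1 - 1)) by (apply sqrt_lt_R0; lra).
    assert (2 * K <= eps * sqrt (T1 - 1)).
    { apply (Rmult_le_reg_r (/ eps)); [apply Rinv_0_lt_compat; lra|].
      replace (eps * sqrt (T1 - 1) * / eps) with (sqrt (T1 - 1)) by (field; lra). exact Hsq. }
    assert (K * (2 / sqrt (T1 - 1)) <= eps).
    { replace (K * (2 / sqrt (T1 - 1))) with (2 * K / sqrt (T1 - 1)) by (field; lra).
      apply (Rmult_le_reg_r (sqrt (T1 - 1))); [lra|].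
      replace (2 * K / sqrt (T1 - 1) * sqrt (T1 - 1)) with (2 * K) by (field; lra). lra. }
    lra.
  - apply (core pp Hp n T1 (goodf a) K HT1g HK).
    intros t Ht Hr. apply Rleb_true_inv in Hr.
    apply (det_t a ha j0 t); [unfold j0; lia| exact He| lra| lra| fold pp C0 K1; lra].
Qed.
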